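(* Let $K$ be a linearly ordered set and let $\{(\mathcal{A}_{k,\ell},\mathcal{A}_{k,r})\}_{k\in K}$ be pairs of subalgebras of a non-commutative space $(\mathcal{A},\varphi)$ which are bi-monotonically independent with respect to $\varphi$. Then: (i) the family $\{\mathcal{A}_{k,\ell}\}_{k\in K}$ is monotonically independent with respect to $\varphi$; (ii) the family $\{\mathcal{A}_{k,r}\}_{k\in K}$ is monotonically independent with respect to $\varphi$ (for the same order on $K$); (iii) if $j\ne k$, then $\mathcal{A}_{k,\ell}$ and $\mathcal{A}_{j,r}$ are classically independent, in the sense that for any $x_1,\dots,x_n\in\mathcal{A}_{k,\ell}\cup\mathcal{A}_{j,r}$, with $L=\{i: x_i\in\mathcal{A}_{k,\ell}\}$ and $R=\{1,\dots,n\}\setminus L$ (each $x_i$ assigned to one of the two algebras), one has $\varphi(x_1\cdots x_n)=\varphi(x_L)\varphi(x_R)$.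
   Context: A family of subalgebras $\{\mathcal{C}_k\}_{k\in K}$ ($K$ linearly ordered) of $(\mathcal{A},\varphi)$ is monotonically independent if $\varphi(c_1\cdots c_{p-1}c_pc_{p+1}\cdots c_n)=\varphi(c_p)\varphi(c_1\cdots c_{p-1}c_{p+1}\cdots c_n)$ whenever $c_j\in\mathcal{C}_{k_j}$ and $k_{p-1}<k_p>k_{p+1}$ (one inequality eliminated if $p=1$ or $p=n$). A non-commutative space $(\mathcal{A},\varphi)$ is a complex algebra with a linear functional, with $\varphi(1)=1$ if $\mathcal{A}$ is unital. For algebras $\mathcal{C}_k$, $\sqcup_k\mathcal{C}_k$ denotes the free product without identification of units, $*_k\mathcal{C}_k$ the free product of unital algebras with identification of units, and $\widetilde{\mathcal{C}}=\mathbb{C}1\oplus\mathcal{C}$ the unitization; $\widetilde{\mathcal{C}_1}*\widetilde{\mathcal{C}_2}\cong\widetilde{\mathcal{C}_1\sqcup\mathcal{C}_2}$. Notation. For $n\ge1$ and $\chi:\{1,\dots,n\}\to\{\ell,r\}$ with $\chi^{-1}(\{\ell\})=\{i_1<\dots<i_p\}$ and $\chi^{-1}(\{r\})=\{i_{p+1}>\dots>i_n\}$, let $\prec_\chi$ be the total order $i_1\prec_\chi\cdots\prec_\chi i_n$. A $\chi$-interval is an interval for $\prec_\chi$. For $V=\{v_1<\dots<v_s\}$ write $x_V=x_{v_1}\cdots x_{v_s}$; a functional applied to the empty product equals $1$. For $\omega:\{1,\dots,n\}\to K$, $\pi_{\chi,\omega}$ is the unique partition of $\{1,\dots,n\}$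 into blocks $V_1,\dots,V_m$ such that each $V_k$ is a $\chi$-interval, $\max_{\prec_\chi}V_k\prec_\chi\min_{\prec_\chi}V_{k+1}$, $\omega$ is constant on each $V_k$, and $\omega(V_k)\ne\omega(V_{k+1})$. c-bi-free product. Given pairs of unital algebras $(\mathcal{B}_{k,\ell},\mathcal{B}_{k,r})_{k\in K}$ and unital linear functionals $\varphi_k,\psi_k$ on $\mathcal{B}_{k,\ell}*\mathcal{B}_{k,r}$, their c-bi-free product $(\varphi,\psi)$ is the unique pair of unital linear functionals on $*_k(\mathcal{B}_{k,\ell}*\mathcal{B}_{k,r})$ restricting to $\varphi_k,\psi_k$ and such that whenever $b_j\in\mathcal{B}_{\omega(j),\chi(j)}$ with $\psi(b_V)=0$ for all $V\in\pi_{\chi,\omega}$, then $\psi(b_1\cdots b_n)=0$ and $\varphi(b_1\cdots b_n)=\prod_{V\in\pi_{\chi,\omega}}\varphi(b_V)$. Bi-monotonic product. For pairs $(\mathcal{A}_{k,\ell},\mathcal{A}_{k,r})$, $k=1,2$, with linear functionals $\varphi_k$ on $\mathcal{A}_{k,\ell}\sqcup\mathcal{A}_{k,r}$: let $\widetilde{\varphi_k}$ be the unital extension to $\widetilde{\mathcal{A}_{k,\ell}\sqcup\mathcal{A}_{k,r}}$, $\delta_1$ the unital functional on $\widetilde{\mathcal{A}_{1,\ell}\sqcup\mathcal{A}_{1,r}}$ vanishing on $\mathcal{A}_{1,\ell}\sqcup\mathcal{A}_{1,r}$, and $(\widetilde\varphi,\widetilde\psi)$ the c-bi-free product of $(\widetilde{\varphi_1},\delta_1)$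 and $(\widetilde{\varphi_2},\widetilde{\varphi_2})$ for the pairs $(\widetilde{\mathcal{A}_{k,\ell}},\widetilde{\mathcal{A}_{k,r}})$. Then $\varphi_1\rhd\!\!\rhd\varphi_2$ is the restriction of $\widetilde\varphi$ to $(\mathcal{A}_{1,\ell}\sqcup\mathcal{A}_{1,r})\sqcup(\mathcal{A}_{2,\ell}\sqcup\mathcal{A}_{2,r})$, regarded as a functional for the pair $(\mathcal{A}_{1,\ell}\sqcup\mathcal{A}_{2,\ell},\mathcal{A}_{1,r}\sqcup\mathcal{A}_{2,r})$. This product is associative, so iterated products are well defined. Bi-monotonic independence. A family $\{(\mathcal{A}_{k,\ell},\mathcal{A}_{k,r})\}_{k\in K}$ of pairs of subalgebras of $(\mathcal{A},\varphi)$ is bi-monotonically independent if for every finite $k_1<\dots<k_p$ in $K$, $\varphi\circ\iota=\varphi_{k_1}\rhd\!\!\rhd\cdots\rhd\!\!\rhd\varphi_{k_p}$, where $\iota:\sqcup_{j}(\mathcal{A}_{k_j,\ell}\sqcup\mathcal{A}_{k_j,r})\to\mathcal{A}$ is induced by the inclusions and $\varphi_k=\varphi\circ\iota|_{\mathcal{A}_{k,\ell}\sqcup\mathcal{A}_{k,r}}$. *)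

(* Defs.v *)
From HB Require Import structures.
From mathcomp Require Import all_boot all_order all_algebra.
Set Implicit Arguments. Unset Strict Implicit. Unset Printing Implicit Defensive.
Import Order.TTheory GRing.Theory.
Local Open Scope ring_scope.

(* Sides: [true] = left (l), [false] = right (r). *)

Section NCSpace.
Variables (F : fieldType) (V : lmodType F) (mul : V -> V -> V) (phi : V -> F).

Definition nc_space : Prop :=
  [/\ forall x y z, mul x (mul y z) = mul (mul x y) z,
      forall c x y z, mul (c *: x + y) z = c *: mul x z + mul y z,
      forall c x y z, mul z (c *: x + y) = c *: mul z x + mul z y,
      forall c x y, phi (c *: x + y) = c * phi x + phi y &
      forall e, (forall x, mul e x = x /\ mul x e = x) -> phi e = 1].

Definition subalg (C : V -> Prop) : Prop :=
  [/\ C 0, forall x y, C x -> C y -> C (x + y),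
      forall c x, C x -> C (c *: x) & forall x y, C x -> C y -> C (mul x y)].

Definition phil (s : seq V) : F :=
  if s is x :: t then phi (foldl mul x t) else 1.

Definition mono_indep (K : Type) (ltK : K -> K -> Prop) (C : K -> V -> Prop) : Prop :=
  forall (n p : nat) (c : nat -> V) (kk : nat -> K),
    (p < n)%N ->
    (forall i, (i < n)%N -> C (kk i) (c i)) ->
    ((0 < p)%N -> ltK (kk p.-1) (kk p)) ->
    ((p.+1 < n)%N -> ltK (kk p.+1) (kk p)) ->
    phil [seq c i | i <- iota 0 n] =
    phi (c p) * phil [seq c i | i <- iota 0 n & i != p].

Definition classical_indep (C1 C2 : V -> Prop) : Prop :=
  forall (n : nat) (x : nat -> V) (inL : nat -> bool),
    (0 < n)%N ->
    (forall i, (i < n)%N -> if inL i then C1 (x i) else C2 (x i)) ->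
    phil [seq x i | i <- iota 0 n] =
    phil [seq x i | i <- iota 0 n & inL i] *
    phil [seq x i | i <- iota 0 n & ~~ inL i].

Variables (d : Order.disp_t) (K : orderType d) (Asub : K -> bool -> V -> Prop).

(* letters of the free product (without units) of all A_{k,s}: tag (k,s) and element *)
Definition letter := (K * bool * V)%type.
Definition word := seq letter.

(* phi o iota on words (empty word = unit, value 1) *)
Definition phiw (w : word) : F := phil [seq l.2 | l <- w].

Definition valid (T : seq K) (w : word) : Prop :=
  forall l, l \in w -> l.1.1 \in T /\ Asub l.1.1 l.1.2 l.2.

(* Phi, given on words, is (the word-form of) a linear functional on the
   unitization of the free product of the A_{k,s}, k in T, s in {l,r}:
   multilinear in each letter, and adjacent letters from the same algebra
   may be multiplied. *)
Definition lin_fp (T : seq K) (Phi : word -> F) : Prop :=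
  [/\ forall u v k s a b, valid T (u ++ v) -> k \in T -> Asub k s a -> Asub k s b ->
        Phi (u ++ (k, s, a + b) :: v) = Phi (u ++ (k, s, a) :: v) + Phi (u ++ (k, s, b) :: v),
      forall u v k s c a, valid T (u ++ v) -> k \in T -> Asub k s a ->
        Phi (u ++ (k, s, c *: a) :: v) = c * Phi (u ++ (k, s, a) :: v) &
      forall u v k s a b, valid T (u ++ v) -> k \in T -> Asub k s a -> Asub k s b ->
        Phi (u ++ (k, s, a) :: (k, s, b) :: v) = Phi (u ++ (k, s, mul a b) :: v)].

(* formal linear combinations of words: elements of the unitized free product *)
Definition fc := seq (F * word).
Definition fc_one : fc := [:: (1, [::])].
Definition fc_mul (x y : fc) : fc := [seq (p.1 * q.1, p.2 ++ q.2) | p <- x, q <- y].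
Definition ev (Phi : word -> F) (x : fc) : F := \sum_(p <- x) p.1 * Phi p.2.

(* x lies in the unitization of the free product of the A_{k,sd}, k in T *)
Definition in_B (T : seq K) (sd : bool) (x : fc) : Prop :=
  forall p, p \in x -> forall l, l \in p.2 ->
    [/\ l.1.1 \in T, l.1.2 = sd & Asub l.1.1 sd l.2].

Fixpoint runs (f : nat -> bool) (s : seq nat) : seq (seq nat) :=
  match s with
  | [::] => [::]
  | x :: t =>
      match runs f t with
      | [::] => [:: [:: x]]
      | r :: rs => if (if r is y :: _ then f y == f x else false)
                   then (x :: r) :: rs else [:: x] :: r :: rs
      end
  end.

(* the partition pi_{chi,omega} of {0,...,n-1}: maximal intervals of constant omega
   for the order prec_chi (left positions increasing, then right ones decreasing) *)
Definition blocks (n : nat) (chi om : nat -> bool) : seq (seq nat) :=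
  runs om ([seq i <- iota 0 n | chi i] ++ rev [seq i <- iota 0 n | ~~ chi i]).

Definition bprod (b : nat -> fc) (W : seq nat) : fc :=
  foldr (fun i acc => fc_mul (b i) acc) fc_one (sort leq W).

(* the defining property of the c-bi-free product (G, Psi) for the two pairs
   indexed by T1 (omega = false) and T2 (omega = true) *)
Definition cbf_cond (T1 T2 : seq K) (G Psi : word -> F) : Prop :=
  forall (n : nat) (chi om : nat -> bool) (b : nat -> fc),
    (0 < n)%N ->
    (forall i, (i < n)%N -> in_B (if om i then T2 else T1) (chi i) (b i)) ->
    (forall W, W \in blocks n chi om -> ev Psi (bprod b W) = 0) ->
    ev Psi (bprod b (iota 0 n)) = 0 /\
    ev G (bprod b (iota 0 n)) = \prod_(W <- blocks n chi om) ev G (bprod b W).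

(* G = G1 |>|> G2 (bi-monotonic product), G1 a functional for the pairs
   indexed by T1 and G2 for those indexed by T2: G is the first component of the
   c-bi-free product of (unital ext. of G1, delta_1) and (unital ext. of G2, same). *)
Definition bm_prod (T1 : seq K) (G1 : word -> F) (T2 : seq K) (G2 : word -> F)
    (G : word -> F) : Prop :=
  exists Psi : word -> F,
    [/\ lin_fp (T1 ++ T2) G, lin_fp (T1 ++ T2) Psi, G [::] = 1 & Psi [::] = 1] /\
    [/\ (forall w, w != [::] -> valid T1 w -> G w = G1 w /\ Psi w = 0),
        (forall w, w != [::] -> valid T2 w -> G w = G2 w /\ Psi w = G2 w) &
        cbf_cond T1 T2 G Psi].

(* bm_iter s G : G = phi_{k1} |>|> ... |>|> phi_{kp} (left-nested), s = [k1;...;kp] *)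
Inductive bm_iter : seq K -> (word -> F) -> Prop :=
| bm_iter1 k G :
    (forall w, w != [::] -> valid [:: k] w -> G w = phiw w) -> bm_iter [:: k] G
| bm_iterS s k G1 G :
    bm_iter s G1 -> bm_prod s G1 [:: k] phiw G -> bm_iter (rcons s k) G.

Definition bm_indep : Prop :=
  forall s : seq K, sorted (fun x y => (x < y)%O) s -> s != [::] ->
    exists G, bm_iter s G /\
      (forall w, w != [::] -> valid s w -> phiw w = G w).

End NCSpace.

(* Main.v *)
Require Import Defs.
From HB Require Import structures.
From mathcomp Require Import all_boot all_order all_algebra.
From mathcomp Require Import ring zify.
Import Order.TTheory GRing.Theory.

Module Aux.
Set Implicit Arguments. Unset Strict Implicit. Unset Printing Implicit Defensive.
Local Open Scope ring_scope.


Section FC.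
Variables (F : fieldType) (V : lmodType F) (d : Order.disp_t) (K : orderType d).
Local Notation letter := (K * bool * V)%type.
Local Notation word := (seq letter).
Local Notation fcT := (seq (F * word)).

Definition prodfc (bs : seq fcT) : fcT := foldr (@fc_mul F V d K) (fc_one V K) bs.
Definition evp (Phi : word -> F) (pre : word) (X : fcT) : F :=
  \sum_(q <- X) q.1 * Phi (pre ++ q.2).

Lemma ev_evp Phi X : ev Phi X = evp Phi [::] X.
Proof. by []. Qed.

Lemma evp_cat Phi pre X Y : evp Phi pre (X ++ Y) = evp Phi pre X + evp Phi pre Y.
Proof. by rewrite /evp big_cat. Qed.

Lemma evp_mul Phi pre A X :
  evp Phi pre (fc_mul A X) = \sum_(p <- A) p.1 * evp Phi (pre ++ p.2) X.
Proof.
elim: A => [|p A IH]; first by rewrite /fc_mul /= big_nil /evp big_nil.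
rewrite big_cons -IH /fc_mul /= evp_cat; congr (_ + _).
rewrite /evp big_map mulr_sumr; apply: eq_bigr => q _ /=.
by rewrite mulrA catA.
Qed.

Lemma evp_split Phi pre u B1 B2 v :
  evp Phi pre (prodfc (u ++ (B1 ++ B2) :: v)) =
  evp Phi pre (prodfc (u ++ B1 :: v)) + evp Phi pre (prodfc (u ++ B2 :: v)).
Proof.
elim: u pre => [|A u IH] pre /=; rewrite !evp_mul; first by rewrite big_cat.
rewrite -big_split; apply: eq_bigr => p _ /=; by rewrite IH mulrDr.
Qed.

Lemma evp_scal Phi pre u c v :
  evp Phi pre (prodfc (u ++ [:: (c, [::])] :: v)) = c * evp Phi pre (prodfc (u ++ v)).
Proof.
elim: u pre => [|A u IH] pre /=; rewrite !evp_mul.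
  by rewrite big_cons big_nil addr0 /= cats0.
rewrite mulr_sumr; apply: eq_bigr => p _; by rewrite IH mulrCA.
Qed.

Definition plainfc (l : letter) : fcT := [:: (1, [:: l])].

Lemma evp_plain Phi pre v :
  evp Phi pre (prodfc (map plainfc v)) = Phi (pre ++ v).
Proof.
elim: v pre => [|l v IH] pre /=.
  by rewrite /evp /fc_one big_cons big_nil addr0 mul1r.
by rewrite evp_mul big_cons big_nil addr0 /= mul1r IH -catA.
Qed.

Definition fcOf (x : letter * F) : fcT := [:: (1, [:: x.1]); (x.2, [::])].
Definition E Phi (w : seq (letter * F)) : F := evp Phi [::] (prodfc (map fcOf w)).

Lemma evp_zero Phi pre u w : (forall x, x \in w -> x.2 = 0) ->
  evp Phi pre (prodfc (u ++ map fcOf w)) =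
  evp Phi pre (prodfc (u ++ map plainfc (map fst w))).
Proof.
elim: w u => [|x w IH] u H //=.
have -> : fcOf x = plainfc x.1 ++ [:: (x.2, [::])] by [].
rewrite evp_split evp_scal (H x (mem_head _ _)) mul0r addr0.
rewrite -!cat_rcons IH // => y yw; apply: H; by rewrite inE yw orbT.
Qed.

Lemma E_zero Phi w : (forall x, x \in w -> x.2 = 0) -> E Phi w = Phi (map fst w).
Proof. by move=> H; rewrite /E -(cat0s (map fcOf w)) evp_zero // evp_plain. Qed.

Lemma E_change Phi u v l a a' :
  E Phi (u ++ (l, a') :: v) = E Phi (u ++ (l, a) :: v) + (a' - a) * E Phi (u ++ v).
Proof.
rewrite /E !map_cat !map_cons.
have h : forall c, fcOf (l, c) = plainfc l ++ [:: (c, [::])] by [].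
rewrite !h !evp_split !evp_scal; ring.
Qed.

Lemma E_nil Phi : Phi [::] = 1 -> E Phi [::] = 1.
Proof. by move=> h; rewrite /E /= /evp /fc_one big_cons big_nil addr0 mul1r. Qed.

Lemma evp_ext Phi1 Phi2 pre w :
  (forall u, {subset u <= map fst w} -> Phi1 (pre ++ u) = Phi2 (pre ++ u)) ->
  evp Phi1 pre (prodfc (map fcOf w)) = evp Phi2 pre (prodfc (map fcOf w)).
Proof.
elim: w pre => [|x w IH] pre H /=.
  by rewrite /evp /fc_one !big_cons !big_nil /= H.
rewrite !evp_mul !big_cons !big_nil /=; congr (_ * _ + (_ * _ + _)).
  apply: IH => u su; rewrite -catA; apply: H => y.
  by rewrite !inE => /orP [/eqP -> | /su ->]; rewrite ?eqxx ?orbT.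
apply: IH => u su; rewrite cats0; apply: H => y /su yw; by rewrite inE yw orbT.
Qed.

Lemma E_ext Phi1 Phi2 w :
  (forall u, {subset u <= map fst w} -> Phi1 u = Phi2 u) -> E Phi1 w = E Phi2 w.
Proof. by move=> H; apply: evp_ext. Qed.

End FC.

Lemma runs_flatten f s : flatten (runs f s) = s.
Proof.
elim: s => [|x t IH] //=.
case E: (runs f t) IH => [|r rs] IH; first by rewrite -IH.
by case: ifP => _ /=; rewrite -IH.
Qed.

Lemma runs_props f s W : W \in runs f s -> W != [::] /\ forall y, y \in W -> f y = f (head 0%N W).
Proof.
elim: s W => [|x t IH] W //=.
case E: (runs f t) IH => [|r rs] IH.
  by rewrite inE => /eqP ->; split => // y; rewrite inE => /eqP ->.
have [rn rc] := IH r (mem_head _ _).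
have IH' : forall W, W \in rs -> W != [::] /\ forall y, y \in W -> f y = f (head 0%N W).
  by move=> W' h; apply: IH; rewrite inE h orbT.
case: ifP => hr.
  rewrite inE => /orP [/eqP -> | /IH' //]; split => // y.
  rewrite inE => /orP [/eqP -> // | yr] /=; rewrite rc //.
  by case: r rn rc hr {IH IH' E yr} => // z r _ _ /= /eqP.
rewrite !inE => /orP [/eqP -> | /orP [/eqP -> | /IH' //]] //.
by split => // y; rewrite inE => /eqP ->.
Qed.

Lemma runs_infix f s W : W \in runs f s -> exists s1 s2, s = s1 ++ W ++ s2.
Proof.
move=> h; move: (runs_flatten f s); case/splitPr: h => R1 R2.
rewrite flatten_cat /= => <-; by exists (flatten R1), (flatten R2).
Qed.

Lemma runs_const f s c : s != [::] -> (forall y, y \in s -> f y = c) -> runs f s = [:: s].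
Proof.
elim: s => [|x t IH] //= _ H.
case: t IH H => [|y t] IH H //=.
rewrite /= in IH; rewrite IH //; last by move=> z zt; apply: H; rewrite inE zt orbT.
by rewrite (H y) ?(H x) ?eqxx // !inE eqxx ?orbT.
Qed.

Lemma runs_two f s1 s2 c : s1 != [::] -> s2 != [::] ->
  (forall y, y \in s1 -> f y = c) -> (forall y, y \in s2 -> f y = ~~ c) ->
  runs f (s1 ++ s2) = [:: s1; s2].
Proof.
move=> n1 n2 H1 H2; elim: s1 n1 H1 => [|x t IH] //= _ H1.
case: t IH H1 => [|y t] IH H1 /=.
  rewrite (runs_const n2 H2).
  clear IH; case: s2 n2 H2 => // z s2 _ H2 /=; rewrite (H2 z (mem_head _ _)) (H1 x (mem_head _ _)).
  by case: c {H1 H2}.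
rewrite /= in IH; rewrite IH //; last by move=> z zt; apply: H1; rewrite inE zt orbT.
by rewrite (H1 y) ?(H1 x) ?eqxx // !inE eqxx ?orbT.
Qed.

Lemma iota_adj s1 x y s2 m n : s1 ++ x :: y :: s2 = iota m n -> y = x.+1.
Proof.
move=> h.
have hs : ((size s1).+1 < n)%N by rewrite -(size_iota m n) -h size_cat /= addnS ltnS addnS ltnS leq_addr.
have := congr1 (nth 0%N ^~ (size s1)) h; have := congr1 (nth 0%N ^~ (size s1).+1) h.
rewrite !nth_cat ltnn subnn /= ltnNge leqnSn /= subSnn /= !nth_iota //; last by apply: ltnW.
by move=> -> ->; rewrite addnS.
Qed.

Lemma rev_iota_adj s1 x y s2 n : s1 ++ x :: y :: s2 = rev (iota 0 n) -> x = y.+1.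
Proof.
move=> h; have : iota 0 n = rev s2 ++ y :: x :: rev s1.
  by rewrite -[iota 0 n]revK -h rev_cat !rev_cons -!cats1 -!catA.
by move=> /esym /iota_adj.
Qed.


Section Chain.
Variables (L : Type) (F : fieldType) (top : L -> bool) (okw : seq (L * F) -> Prop)
  (Ef Rf : seq (L * F) -> F).
Hypotheses
  (hE : forall u v l a a', Ef (u ++ (l, a') :: v) = Ef (u ++ (l, a) :: v) + (a' - a) * Ef (u ++ v))
  (hR : forall u v l a a', top l ->
      Rf (u ++ (l, a') :: v) = Rf (u ++ (l, a) :: v) + (a' - a) * Rf (u ++ v))
  (okrem : forall u v l a, okw (u ++ (l, a) :: v) -> top l -> okw (u ++ v))
  (okchg : forall u v l a a', okw (u ++ (l, a) :: v) -> top l -> okw (u ++ (l, a') :: v))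
  (okbot : forall u v l a, okw (u ++ (l, a) :: v) -> ~~ top l -> a = 0)
  (base0 : forall w, okw w -> ~~ has (fun x => top x.1) w -> Ef w = Rf w)
  (base1 : forall w, okw w -> has (fun x => top x.1) w ->
     exists w', [/\ okw w', map fst w' = map fst w & Ef w' = Rf w']).

Lemma chain w : okw w -> Ef w = Rf w.
Proof.
move: {2}(size w) (leqnn (size w)) => n; elim: n w => [|n IHn] w.
  rewrite leqn0 => /nilP -> ok; apply: base0 => //.
move=> hs ok.
have step : forall v1 v2 u, map fst v1 = map fst v2 -> (size (u ++ v1) <= n.+1)%N ->
    okw (u ++ v1) -> okw (u ++ v2) -> (Ef (u ++ v1) = Rf (u ++ v1) <-> Ef (u ++ v2) = Rf (u ++ v2)).
  elim=> [|[l a1] v1 IH] [|[l' a2] v2] u //= [el ev] hsz ok1 ok2.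
  subst l'.
  have hsz' : (size (rcons u (l, a2) ++ v1) <= n.+1)%N by rewrite cat_rcons !size_cat /= in hsz *.
  case ht: (top l).
    have hsm : (size (u ++ v1) <= n)%N by rewrite !size_cat /= addnS ltnS in hsz *.
    have ih := IHn _ hsm (okrem ok1 ht).
    have ok3 : okw (u ++ (l, a2) :: v1) by apply: okchg ok1 ht.
    have e1 : (Ef (u ++ (l, a1) :: v1) = Rf (u ++ (l, a1) :: v1)) <->
              (Ef (u ++ (l, a2) :: v1) = Rf (u ++ (l, a2) :: v1)).
      rewrite (@hE u v1 l a1 a2) (@hR u v1 l a1 a2 ht) ih.
      split=> [-> // | /addIr //].
    rewrite e1 -!cat_rcons; apply: IH => //; by rewrite cat_rcons.
  have e1 := okbot ok1 (negbT ht); have e2 := okbot ok2 (negbT ht); subst a1 a2.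
  rewrite -!cat_rcons; apply: IH => //; by rewrite cat_rcons.
case hh: (has (fun x => top x.1) w); last by apply: base0 => //; rewrite hh.
have [w' [ok' ef eq']] := base1 ok hh.
have sz : size w' = size w by rewrite -(size_map fst w') ef size_map.
have := step w' w [::] ef; rewrite /= sz => h; by apply/(h hs ok' ok).
Qed.
End Chain.


Lemma sorted_rem (T : Type) (r : rel T) u x v :
  (forall a b, r a x -> r a b) -> sorted r (u ++ x :: v) -> sorted r (u ++ v).
Proof.
move=> H; rewrite sorted_cat_cons => /andP [h1 h2].
case: u h1 => [|y u] /=; first by move=> _; apply: path_sorted h2.
rewrite rcons_path cat_path => /andP [-> h3] /=.
case: v h2 => //= z v /andP [h4 ->]; by rewrite (H _ _ h3).
Qed.

Lemma blocks_const n (s : bool) om :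
  blocks n (fun _ => s) om = runs om (if s then iota 0 n else rev (iota 0 n)).
Proof.
have h1 : forall t : seq nat, [seq i <- t | true] = t by elim=> //= a t ->.
have h2 : forall t : seq nat, [seq i <- t | false] = [::] by elim.
by rewrite /blocks; case: s => /=; rewrite h1 h2 ?cats0.
Qed.

Lemma sort1 (i : nat) : sort leq [:: i] = [:: i].
Proof. by []. Qed.

Section Main.
Variables (F : fieldType) (V : lmodType F) (mul : V -> V -> V) (phi : V -> F)
  (d : Order.disp_t) (K : orderType d) (Asub : K -> bool -> V -> Prop).
Hypotheses (nc : nc_space mul phi) (hsub : forall k s, subalg mul (Asub k s))
  (bmi : bm_indep mul phi Asub).

Local Notation letter := (K * bool * V)%type.
Local Notation item := (letter * F)%type.
Local Notation phiW := (@Defs.phiw F V mul phi d K).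
Local Notation fcOf := (@fcOf F V d K).

Lemma bm_iter_nn s G : bm_iter mul phi Asub s G -> s != [::].
Proof. by case=> [k G0 _|s0 k G1 G0 _ _]; rewrite // -size_eq0 size_rcons. Qed.

Lemma setup s' M : s' != [::] -> sorted <%O (rcons s' M) ->
  exists (G Psi : seq letter -> F),
  [/\ G [::] = 1 /\ Psi [::] = 1,
      (forall w, w != [::] -> valid Asub s' w -> Psi w = 0),
      (forall w, w != [::] -> valid Asub [:: M] w -> G w = phiW w /\ Psi w = phiW w),
      cbf_cond Asub s' [:: M] G Psi &
      (forall w, valid Asub (rcons s' M) w -> G w = phiW w)].
Proof.
move=> ns ss.
have nn : rcons s' M != [::] by rewrite -size_eq0 size_rcons.
have [G [hit heq]] := bmi ss nn.
have [G1 hp] : exists G1, bm_prod mul Asub s' G1 [:: M] phiW G.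
  move: hit; move E: (rcons s' M) => s hit; case: hit E => [k G0 _ | s0 k G1 G0 _ hp] E.
    move/(congr1 size): E; rewrite size_rcons /= => -[] e.
    by move: ns; rewrite -size_eq0 e.
  case/rcons_inj: E => -> ->; by exists G1.
have [Psi [[_ _ hG0 hP0] [h1 h2 hc]]] := hp.
exists G, Psi; split.
- by [].
- by move=> w wn vw; have [] := h1 w wn vw.
- exact: h2.
- exact: hc.
- move=> w vw; case: (eqVneq w [::]) => [-> | wn]; first by rewrite hG0.
  by rewrite heq.
Qed.

Definition isM (M : K) (l : letter) := l.1.1 == M.
Definition rM (M : K) := fun x y : letter => ~~ (isM M x && isM M y).

Definition ok1 (s : bool) (M : K) (S : seq K) (w : seq item) : Prop :=
  [/\ forall x, x \in w -> [/\ x.1.1.2 = s, Asub x.1.1.1 s x.1.2 & x.1.1.1 \in S],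
      forall x, x \in w -> ~~ isM M x.1 -> x.2 = 0 &
      sorted (rM M) (map fst w)].

Lemma bprod_fcOf (f : nat -> item) W :
  bprod (fun i => fcOf (f i)) W = prodfc (map fcOf (map f (sort leq W))).
Proof. rewrite /bprod /prodfc; by elim: (sort leq W) => //= a t ->. Qed.

Lemma E1 Phi (x : item) : E Phi [:: x] = Phi [:: x.1] + x.2 * Phi [::].
Proof.
by rewrite /E /= evp_mul !big_cons !big_nil /evp /fc_one !big_cons !big_nil /= !mul1r !addr0 ?mulr1 ?cats0.
Qed.

Lemma phiW1 (l : letter) : phiW [:: l] = phi l.2.
Proof. by []. Qed.


Lemma nonnil1 (l : letter) : [:: l] != [::]. Proof. by []. Qed.

Lemma cbf_i (s : bool) s' M (G Psi : seq letter -> F) (w : seq item) :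
  G [::] = 1 /\ Psi [::] = 1 ->
  (forall w, w != [::] -> valid Asub s' w -> Psi w = 0) ->
  (forall w, w != [::] -> valid Asub [:: M] w -> G w = phiW w /\ Psi w = phiW w) ->
  cbf_cond Asub s' [:: M] G Psi ->
  ok1 s M (rcons s' M) w -> has (fun x => isM M x.1) w ->
  (forall x, x \in w -> isM M x.1 -> x.2 = - phi x.1.2) -> E G w = 0.
Proof.
move=> [hG0 hP0] hT1 hT2 hc [hw1 hw2 hw3] hh htop.
set n := size w.
pose x0 : item := ((M, s, 0), 0).
pose b i := fcOf (nth x0 w i).
pose om i := isM M (nth x0 w i).1.
have n0 : (0 < n)%N by rewrite /n; case: (w) hh.
have memw : forall i, (i < n)%N -> nth x0 w i \in w by move=> i; apply: mem_nth.
have hB : forall i, (i < n)%N -> in_B Asub (if om i then [:: M] else s') s (b i).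
  move=> i hi p; rewrite !inE => /orP [/eqP -> | /eqP ->] l //=.
  rewrite inE => /eqP ->.
  have [e1 e2 e3] := hw1 _ (memw i hi).
  split => //; rewrite /om; case: ifP => hm; first by rewrite inE; exact: hm.
  by move: e3; rewrite mem_rcons inE; rewrite /isM in hm; rewrite hm.
have Sdef := blocks_const n s om.
set S := (if s then iota 0 n else rev (iota 0 n)) in Sdef.
have memS : forall i, (i \in S) = (i < n)%N by move=> i; rewrite /S; case: (s); rewrite ?mem_rev mem_iota.
have adjS : forall s1 x y s2, S = s1 ++ x :: y :: s2 -> y = x.+1 \/ x = y.+1.
  rewrite /S; case: (s) => s1 x y s2 h; [left; exact: (iota_adj (esym h)) | right; exact: (rev_iota_adj (esym h))].
have adjw : forall i, (i.+1 < n)%N -> ~~ (om i && om i.+1).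
  move=> i hi; move/(sortedP (M, s, 0)): hw3; rewrite size_map => /(_ i hi).
  by rewrite !(nth_map x0) // ltnW.
have blk : forall W, W \in blocks n (fun _ => s) om ->
   [/\ W != [::], forall i, i \in W -> (i < n)%N, forall i, i \in W -> om i = om (head 0%N W)
     & om (head 0%N W) -> W = [:: head 0%N W]].
  move=> W; rewrite Sdef => hW.
  have [nW cW] := runs_props hW.
  have [s1 [s2 eS]] := runs_infix hW.
  have inW : forall i, i \in W -> (i < n)%N by move=> i iW; rewrite -memS eS !mem_cat iW orbT.
  split => // hom.
  case: W hW nW cW eS inW hom => [|x [|y W]] // hW _ cW eS inW /= hx.
  exfalso.
  have hy : om y by rewrite (cW y) //= !inE eqxx orbT.
  move: eS; rewrite -cat1s -catA cat1s -(cat1s y) -catA cat1s => eS.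
  have [e|e] := adjS s1 x y (W ++ s2) eS.
  - subst y; have hn : (x.+1 < n)%N by apply: inW; rewrite !inE eqxx orbT.
    by have := adjw x hn; rewrite hx hy.
  - subst x; have hn : (y.+1 < n)%N by apply: inW; rewrite !inE eqxx.
    by have := adjw y hn; rewrite hx hy.
have single : forall (Phi : seq letter -> F) i, (i < n)%N -> om i ->
    Phi [::] = 1 -> Phi [:: (nth x0 w i).1] = phiW [:: (nth x0 w i).1] ->
    ev Phi (bprod b [:: i]) = 0.
  move=> Phi i hi hom h0 h1.
  rewrite ev_evp /b bprod_fcOf sort1; change (E Phi [:: nth x0 w i] = 0).
  rewrite E1 h1 h0 phiW1 htop ?memw //.
  by rewrite mulr1 addrN.
have v1 : forall i, (i < n)%N -> om i -> valid Asub [:: M] [:: (nth x0 w i).1].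
  move=> i hi hom l; rewrite inE => /eqP ->.
  have [e1 e2 e3] := hw1 _ (memw i hi).
  rewrite e1; split => //; rewrite inE; exact: hom.
have hPsi : forall W, W \in blocks n (fun _ => s) om -> ev Psi (bprod b W) = 0.
  move=> W hW; have [nW inW cW sW] := blk W hW.
  case hom: (om (head 0%N W)).
    rewrite (sW hom); have hi : (head 0%N W < n)%N by apply: inW; case: (W) nW => //= a t _; rewrite inE eqxx.
    apply: single => //; by have [] := hT2 _ (nonnil1 _) (v1 _ hi hom).
  rewrite ev_evp /b bprod_fcOf -/(E Psi _) E_zero; last first.
    move=> x /mapP [i]; rewrite mem_sort => iW ->; apply: hw2; first by apply: memw; apply: inW.
    by have := cW i iW; rewrite hom /om => ->.
  apply: hT1.
    by rewrite -size_eq0 !size_map size_sort size_eq0.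
  move=> l /mapP [x /mapP [i]]; rewrite mem_sort => iW -> ->.
  have [e1 e2 e3] := hw1 _ (memw i (inW i iW)).
  have hm : ~~ isM M (nth x0 w i).1 by have := cW i iW; rewrite hom /om => ->.
  rewrite e1; split => //.
  by move: e3; rewrite mem_rcons inE; rewrite /isM in hm; rewrite (negbTE hm).
have [_ hG] := hc n (fun _ => s) om b n0 hB hPsi.
have ew : map (nth x0 w) (iota 0 n) = w by rewrite -[RHS](mkseq_nth x0 w).
move: hG; rewrite ev_evp /b bprod_fcOf (sorted_sort leq_trans (iota_sorted 0 n)) ew -/(E G w) => ->.
have [i hi hom] := has_nthP x0 hh.
have : i \in flatten (blocks n (fun _ => s) om) by rewrite Sdef runs_flatten memS.
move=> /flattenP [W hW iW].
have [nW inW cW sW] := blk W hW.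
have hom' : om (head 0%N W) by rewrite -(cW i iW).
have eW := sW hom'; rewrite eW inE in iW; move/eqP: iW => iW.
rewrite (big_rem W) //= eW -iW single ?mul0r //.
by have [] := hT2 _ (nonnil1 _) (v1 _ hi hom).
Qed.


Lemma sorted_rcons_lt (s : seq K) M : sorted <%O s -> (forall y, y \in s -> (y < M)%O) ->
  sorted <%O (rcons s M).
Proof.
case: s => // x s /= hs hl; rewrite rcons_path hs /=; apply: hl.
by rewrite mem_last.
Qed.

Lemma TOP (s : bool) M (w : seq letter) :
  (forall l, l \in w -> l.1.2 = s /\ Asub l.1.1 s l.2) ->
  (forall l, l \in w -> (l.1.1 <= M)%O) ->
  sorted (rM M) w ->
  phiW w = (\prod_(l <- w | isM M l) phi l.2) * phiW [seq l <- w | ~~ isM M l].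
Proof.
move=> hw hwM hsrt.
case hh: (has (isM M) w); last first.
  rewrite big_hasC ?hh // mul1r; congr phiW; apply/esym/all_filterP.
  apply/allP => l lw; apply/negP => h; move/negbT: hh => /hasPn /(_ l lw).
  by rewrite h.
set s' := sort <=%O (undup [seq l.1.1 | l <- w & ~~ isM M l]).
have s'lt : forall y, y \in s' -> (y < M)%O.
  move=> y; rewrite mem_sort mem_undup => /mapP [l]; rewrite mem_filter => /andP [hl lw] ->.
  by rewrite lt_neqAle hl (hwM l lw).
have ss : sorted <%O (rcons s' M).
  apply: sorted_rcons_lt => //.
  by rewrite lt_sorted_uniq_le sort_uniq undup_uniq sort_sorted //; exact: le_total.
have keyS : forall l, l \in w -> l.1.1 \in rcons s' M.
  move=> l lw; rewrite mem_rcons inE; case hm: (isM M l); first by rewrite /isM in hm; rewrite hm.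
  rewrite /isM in hm; rewrite hm /= mem_sort mem_undup; apply/mapP; exists l => //.
  by rewrite mem_filter /isM hm.
case: (eqVneq s' [::]) => hs.
  have allM : forall l, l \in w -> isM M l.
    by move=> l lw; have := keyS l lw; rewrite hs mem_rcons inE orbF.
  case: w hw hwM hsrt hh allM {keyS s'lt s' ss hs} => [|x [|y w]] // hw hwM hsrt hh allM.
    have hx := allM x (mem_head _ _).
    by rewrite big_cons big_nil /= hx /= (_ : phiW [::] = 1) // !mulr1.
  by move: hsrt; rewrite /= /rM allM ?mem_head // allM // !inE eqxx orbT.
have [G [Psi [[hG0 hP0] hT1 hT2 hc hGv]]] := setup hs ss.
pose Rf (w : seq item) := G [seq x.1 | x <- w & ~~ isM M x.1] *
   \prod_(x <- w | isM M x.1) (phi x.1.2 + x.2).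
have CH := @chain _ F (isM M) (ok1 s M (rcons s' M)) (E G) Rf.
have main : forall w, ok1 s M (rcons s' M) w -> E G w = Rf w.
  apply: CH.
  - by move=> u v l a a'; apply: E_change.
  - move=> u v l a a' ht; rewrite /Rf !filter_cat /= ht /= !big_cat !big_cons /= ht; ring.
  - move=> u v l a [h1 h2 h3] ht; split.
    + by move=> x xw; apply: h1; rewrite mem_cat inE; rewrite mem_cat in xw; case/orP: xw => ->; rewrite ?orbT.
    + by move=> x xw; apply: h2; rewrite mem_cat inE; rewrite mem_cat in xw; case/orP: xw => ->; rewrite ?orbT.
    + move: h3; rewrite !map_cat /=; apply: sorted_rem => a0 b0.
      by rewrite /rM ht andbT => /negbTE ->.
  - move=> u v l a a' [h1 h2 h3] ht; split.
    + move=> x; rewrite mem_cat inE => /orP [xu | /orP [/eqP -> | xv]].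
      * by apply: h1; rewrite mem_cat xu.
      * by have [] := h1 (l, a); rewrite ?mem_cat ?mem_head ?orbT.
      * by apply: h1; rewrite mem_cat inE xv !orbT.
    + move=> x; rewrite mem_cat inE => /orP [xu | /orP [/eqP -> | xv]].
      * by apply: h2; rewrite mem_cat xu.
      * by rewrite /= ht.
      * by apply: h2; rewrite mem_cat inE xv !orbT.
    + by move: h3; rewrite !map_cat.
  - move=> u v l a [h1 h2 h3] ht; apply: (h2 (l, a)) => //.
    by rewrite mem_cat mem_head orbT.
  - move=> w0 [h1 h2 h3] hn.
    have hb : forall x, x \in w0 -> ~~ isM M x.1.
      by move=> x xw; apply/negP => hm; move/hasPn: hn => /(_ x xw); rewrite hm.
    rewrite E_zero; last by move=> x xw; apply: h2 => //; apply: hb.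
    rewrite /Rf big_hasC // mulr1; congr G; congr map; apply/esym/all_filterP.
    by apply/allP.
  - move=> w0 [h1 h2 h3] hn.
    pose w' := [seq (if isM M x.1 then (x.1, - phi x.1.2) else x) | x <- w0].
    have ef : map fst w' = map fst w0 by rewrite -map_comp; apply: eq_map => x /=; case: ifP.
    have ok' : ok1 s M (rcons s' M) w'.
      split.
      + move=> x /mapP [y yw ->]; case: ifP => _ /=; exact: (h1 y yw).
      + move=> x /mapP [y yw ->]; case: ifP => hm //=; last by apply: h2.
        by rewrite hm.
      + by rewrite ef.
    exists w'; split => //.
    have -> : E G w' = 0.
      apply: (@cbf_i s s' M G Psi) => //.
      + by rewrite -(has_map fst) ef has_map.
      + move=> x /mapP [y yw ->]; case: ifP => hm //=.
        by rewrite hm.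
    rewrite /Rf; apply/esym/eqP; rewrite mulf_eq0; apply/orP; right.
    rewrite prodf_seq_eq0; move/hasP: hn => [x xw hx]; apply/hasP.
    exists (if isM M x.1 then (x.1, - phi x.1.2) else x); first by apply: map_f.
    by rewrite hx /= hx addrN eqxx.
pose w0 := [seq (l, 0 : F) | l <- w].
have ok0 : ok1 s M (rcons s' M) w0.
  split.
  - move=> x /mapP [l lw ->] /=; have [e1 e2] := hw l lw; split => //; exact: keyS.
  - by move=> x /mapP [l lw ->].
  - by rewrite -map_comp map_id.
have e0 : map fst w0 = w by rewrite /w0 -map_comp map_id.
have vw : forall t, {subset t <= w} -> valid Asub (rcons s' M) t.
  move=> t st l lt; have lw := st l lt; have [e1 e2] := hw l lw.
  by rewrite e1; split => //; apply: keyS.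
have := main w0 ok0; rewrite E_zero ?e0; last by move=> x /mapP [l lw ->].
rewrite (hGv w (vw w (fun x h => h))) => ->.
rewrite /Rf [RHS]mulrC; congr (_ * _).
  rewrite (_ : [seq x.1 | x <- w0 & ~~ isM M x.1] = [seq l <- w | ~~ isM M l]).
    by rewrite hGv //; apply: vw => l; rewrite mem_filter => /andP [_ ->].
  by rewrite /w0 filter_map -map_comp map_id.
rewrite /w0 big_map; apply: eq_bigr => l _ /=; by rewrite addr0.
Qed.


Lemma merge_phiW (w1 w2 : seq letter) a b :
  phiW (w1 ++ a :: b :: w2) = phiW (w1 ++ (a.1, mul a.2 b.2) :: w2).
Proof.
have [assoc _ _ _ _] := nc.
rewrite /Defs.phiw !map_cat /=.
case: (map snd w1) => [|y t] //=.
by rewrite !foldl_cat /= assoc.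
Qed.

Lemma exists_max (t : seq K) : t != [::] -> exists m, m \in t /\ forall y, y \in t -> (y <= m)%O.
Proof.
elim: t => [|a t IH] // _.
case: (eqVneq t [::]) => [-> | tn].
  by exists a; split; rewrite ?mem_head // => y; rewrite inE => /eqP ->.
have [m [mt hm]] := IH tn.
case: (leP a m) => ham.
  exists m; split; first by rewrite inE mt orbT.
  by move=> y; rewrite inE => /orP [/eqP -> // | /hm].
exists a; split; first by rewrite mem_head.
move=> y; rewrite inE => /orP [/eqP -> // | /hm h]; exact: le_trans h (ltW ham).
Qed.

Lemma last_filter (T : eqType) (p : pred T) x (u : seq T) :
  u != [::] -> p (last x u) -> last x (filter p u) = last x u.
Proof.
case/lastP: u => // u y _; rewrite last_rcons => hy.
by rewrite filter_rcons hy last_rcons.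
Qed.

Lemma size_filter_lt (T : Type) (p : pred T) (t : seq T) :
  has p t -> (size [seq l <- t | ~~ p l] < size t)%N.
Proof.
elim: t => //= a t IH; case: (p a) => /= h.
  by rewrite ltnS size_filter count_size.
by rewrite ltnS IH.
Qed.

Lemma mem_ins (T : eqType) (s1 s2 : seq T) c l : l \in s1 ++ c :: s2 -> l = c \/ l \in s1 ++ s2.
Proof.
rewrite !mem_cat inE => /or3P [h|/eqP->|h]; [by right; rewrite h | by left | by right; rewrite h orbT].
Qed.

Lemma mem_wk (T : eqType) (s1 s2 : seq T) a b l : l \in s1 ++ s2 -> l \in s1 ++ a :: b :: s2.
Proof. by rewrite !mem_cat !inE => /orP [->|->]; rewrite ?orbT. Qed.

Lemma Mono (s : bool) n (u : seq letter) x v :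
  (size (u ++ x :: v) <= n)%N ->
  (forall l, l \in u ++ x :: v -> l.1.2 = s /\ Asub l.1.1 s l.2) ->
  (u = [::] \/ ((last x u).1.1 < x.1.1)%O) ->
  (v = [::] \/ ((head x v).1.1 < x.1.1)%O) ->
  phiW (u ++ x :: v) = phi x.2 * phiW (u ++ v).
Proof.
elim: n u x v => [|n IHn] u x v; first by rewrite size_cat /= addnS.
move=> hs hw hu hv.
have nw : [seq l.1.1 | l <- u ++ x :: v] != [::].
  by rewrite -size_eq0 size_map size_cat /= addnS.
have [M [Mw Mmax]] := exists_max nw.
have Mmax' : forall l, l \in u ++ x :: v -> (l.1.1 <= M)%O by move=> l lw; apply: Mmax; apply: map_f.
have hxM : (x.1.1 <= M)%O by apply: Mmax'; rewrite mem_cat mem_head orbT.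
case hu': (sorted (rM M) u); last first.
  have [u1 [a [b [u2 [eu hab]]]]] : exists u1 a b u2, u = u1 ++ a :: b :: u2 /\ ~~ rM M a b.
    move: hu'; clear; elim: u => [|y t IH] //=.
    case: t IH => [|z t] IH //=; case hyz: (rM M y z) => /=.
      by move/IH => [u1 [a [b [u2 [-> h]]]]]; exists (y :: u1), a, b, u2.
    by move=> _; exists [::], y, z, t; rewrite hyz.
  move: hab; rewrite /rM negbK => /andP [ha hb].
  set c : letter := (a.1, mul a.2 b.2).
  have hw' : forall l, l \in u ++ x :: v -> l.1.2 = s /\ Asub l.1.1 s l.2 := hw.
  have [sa Aa] : a.1.2 = s /\ Asub a.1.1 s a.2 by apply: hw; rewrite eu -catA !(mem_cat, inE) eqxx !orbT.
  have [sb Ab] : b.1.2 = s /\ Asub b.1.1 s b.2 by apply: hw; rewrite eu -catA !(mem_cat, inE) eqxx !orbT.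
  have eab : b.1.1 = a.1.1 by rewrite /isM in ha hb; rewrite (eqP ha) (eqP hb).
  have Ac : Asub c.1.1 s c.2.
    have [_ _ _ hm] := hsub a.1.1 s; apply: hm => //; by rewrite -eab.
  have e1 : u ++ x :: v = u1 ++ a :: b :: (u2 ++ x :: v) by rewrite eu -catA.
  have e2 : u ++ v = u1 ++ a :: b :: (u2 ++ v) by rewrite eu -catA.
  rewrite e1 e2 !merge_phiW -/c.
  have -> : u1 ++ c :: u2 ++ x :: v = (u1 ++ c :: u2) ++ x :: v by rewrite -catA.
  have -> : u1 ++ c :: u2 ++ v = (u1 ++ c :: u2) ++ v by rewrite -catA.
  apply: IHn.
  - move: hs; rewrite e1 !size_cat /= !size_cat /=; clear; lia.
  - move=> l; rewrite -catA => /mem_ins [-> | hl]; first by split.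
    by apply: hw; rewrite e1; apply: mem_wk.
  - right; case: hu => [eu0 | hl]; first by rewrite eu0 in eu; case: (u1) eu.
    move: hl; rewrite eu !last_cat /=.
    by case: (u2) => //=; rewrite eab.
  - exact: hv.
case hv': (sorted (rM M) v); last first.
  have [v1 [a [b [v2 [ev hab]]]]] : exists v1 a b v2, v = v1 ++ a :: b :: v2 /\ ~~ rM M a b.
    move: hv'; clear; elim: v => [|y t IH] //=.
    case: t IH => [|z t] IH //=; case hyz: (rM M y z) => /=.
      by move/IH => [u1 [a [b [u2 [-> h]]]]]; exists (y :: u1), a, b, u2.
    by move=> _; exists [::], y, z, t; rewrite hyz.
  move: hab; rewrite /rM negbK => /andP [ha hb].
  set c : letter := (a.1, mul a.2 b.2).
  have [sa Aa] : a.1.2 = s /\ Asub a.1.1 s a.2 by apply: hw; rewrite ev !(mem_cat, inE) eqxx !orbT.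
  have [sb Ab] : b.1.2 = s /\ Asub b.1.1 s b.2 by apply: hw; rewrite ev !(mem_cat, inE) eqxx !orbT.
  have eab : b.1.1 = a.1.1 by rewrite /isM in ha hb; rewrite (eqP ha) (eqP hb).
  have Ac : Asub c.1.1 s c.2.
    have [_ _ _ hm] := hsub a.1.1 s; apply: hm => //; by rewrite -eab.
  have e1 : u ++ x :: v = (u ++ x :: v1) ++ a :: b :: v2 by rewrite ev -catA.
  have e2 : u ++ v = (u ++ v1) ++ a :: b :: v2 by rewrite ev -catA.
  rewrite e1 e2 !merge_phiW -/c -!catA.
  apply: IHn.
  - move: hs; rewrite e1 !size_cat /= !size_cat /=; clear; lia.
  - move=> l; rewrite -cat_cons catA => /mem_ins [-> | hl]; first by split.
    by apply: hw; rewrite e1; apply: mem_wk.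
  - exact: hu.
  - right; case: hv => [ev0 | hl]; first by rewrite ev0 in ev; case: (v1) ev.
    move: hl; rewrite ev.
    by case: (v1) => //=; rewrite eab.
have nMl : forall l, (l.1.1 < x.1.1)%O -> ~~ isM M l.
  move=> l hl; apply/negP; rewrite /isM => /eqP e.
  by move: (lt_le_trans hl hxM); rewrite e ltxx.
have srt : sorted (rM M) (u ++ x :: v).
  rewrite sorted_cat_cons; apply/andP; split.
    case: hu => [-> // | hl]; case: (u) hu' hl => [|y t] //= h1 hl.
    by rewrite rcons_path h1 /rM (negbTE (nMl _ hl)).
  case: hv => [-> // | hl]; case: (v) hv' hl => [|y t] //= h1 hl.
  by rewrite h1 /rM (negbTE (nMl _ hl)) andbF.
have hwu : forall l, l \in u ++ v -> l.1.2 = s /\ Asub l.1.1 s l.2.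
  move=> l hl; apply: hw; move: hl; rewrite !mem_cat inE => /orP [->|->]; by rewrite ?orbT.
have srt' : sorted (rM M) (u ++ v).
  have srtu : sorted (rM M) u by [].
  clear -hu srtu hv hv' nMl; case: u hu srtu => [|y t] hu srtu //=.
  rewrite cat_path; apply/andP; split; first exact: srtu.
  case: v hv hv' => [|z t'] hv hv' //=; apply/andP; split; last exact: hv'.
  rewrite /rM; case: hu => // hl; by rewrite (negbTE (nMl _ hl)).
have ub : forall l, l \in u ++ v -> (l.1.1 <= M)%O.
  move=> l hl; apply: Mmax'; move: hl; rewrite !mem_cat inE => /orP [->|->]; by rewrite ?orbT.
rewrite (TOP hw Mmax' srt) (TOP hwu ub srt') !filter_cat !big_cat big_cons /=.
case hxm: (isM M x) => /=.
  ring.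
set fu := [seq l <- u | ~~ isM M l]; set fv := [seq l <- v | ~~ isM M l].
have hsz : (size (fu ++ x :: fv) <= n)%N.
  have hh : has (isM M) (u ++ x :: v).
    move/mapP: Mw => [l lw el]; apply/hasP; exists l => //; by rewrite /isM el.
  have := size_filter_lt hh; rewrite filter_cat /= hxm -/fu -/fv => h.
  by move: hs; rewrite -ltnS => /(leq_trans h).
rewrite (IHn fu x fv hsz).
- ring.
- move=> l; rewrite mem_cat inE => /or3P [h | /eqP -> | h]; apply: hw.
  + by move: h; rewrite mem_filter mem_cat => /andP [_ ->].
  + by rewrite mem_cat mem_head orbT.
  + by move: h; rewrite mem_filter !(mem_cat, inE) => /andP [_ ->]; rewrite !orbT.
- case: hu => [eu | hl]; first by left; rewrite /fu eu.
  have un : u != [::] by case: (u) hl => //= hl; rewrite ltxx in hl.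
  right; rewrite /fu last_filter //; exact: nMl.
- case: hv => [ev | hl]; first by left; rewrite /fv ev.
  right; rewrite /fv; case: (v) hl => [|y t] /= hl; first by rewrite ltxx in hl.
  by case: ifP => //; rewrite (negbTE (nMl _ hl)).
Qed.

Lemma mono_part (s : bool) : mono_indep mul phi (fun x y : K => (x < y)%O) (fun k => Asub k s).
Proof.
move=> n p c kk hp hC hl hr.
pose l i : letter := (kk i, s, c i).
have en : iota 0 n = iota 0 p ++ p :: iota p.+1 (n - p.+1).
  by rewrite -{1}(subnKC (ltnW hp)) iotaD add0n -(subnSK hp).
have E1 : phil mul phi [seq c i | i <- iota 0 n] = phiW (map l (iota 0 n)) by rewrite /phiw -map_comp.
have E2 : phil mul phi [seq c i | i <- iota 0 n & i != p] =
          phiW (map l (iota 0 p) ++ map l (iota p.+1 (n - p.+1))).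
  rewrite /phiw map_cat -!map_comp -map_cat (eq_map (_ : snd \o l =1 c)) //; congr (phil mul phi (map c _)).
  rewrite en filter_cat /= eqxx /=; congr (_ ++ _); apply/all_filterP/allP => i.
    by rewrite mem_iota add0n => /andP [_ h]; rewrite neq_ltn h.
  by rewrite mem_iota => /andP [h _]; rewrite neq_ltn h orbT.
rewrite E1 E2 en map_cat /=; apply: (@Mono s (size (map l (iota 0 p) ++ l p :: map l (iota p.+1 (n - p.+1))))).
- by [].
- move=> x; rewrite -map_cons -map_cat -en => /mapP [i]; rewrite mem_iota add0n => /andP [_ hi] ->.
  by split => //; apply: hC.
- case: p hp hl hr {en E1 E2} => [|p] hp hl hr; first by left.
  right; rewrite -addn1 iotaD map_cat last_cat /= add0n; rewrite addn1; exact: hl.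
- case: (ltnP p.+1 n) => h.
    right; rewrite -(subnSK h) /=; exact: hr.
  by left; have -> : (n - p.+1 = 0)%N by apply/eqP; rewrite subn_eq0.
Qed.
Lemma filter_nth_iota (T : Type) (x0 : T) (w : seq T) (P : pred T) :
  map (nth x0 w) [seq i <- iota 0 (size w) | P (nth x0 w i)] = filter P w.
Proof. by rewrite -filter_map; congr (filter _ _); exact: mkseq_nth. Qed.

Lemma adjust Phi (tp : pred letter) (w : seq item) (p : seq item) :
  E Phi p = 1 -> has (fun x => tp x.1) w ->
  exists w', [/\ map fst w' = map fst w, (forall x, x \in w' -> ~~ tp x.1 -> x \in w)
           & E Phi (p ++ [seq x <- w' | tp x.1]) = 0].
Proof.
elim: w p => [|y w IH] p // hp /= hh.
case ht: (tp y.1).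
  case hw: (has (fun x => tp x.1) w).
    pose c := 1 - E Phi (p ++ [:: (y.1, 0)]).
    have hc : E Phi (rcons p (y.1, c)) = 1.
      rewrite -cats1 (E_change _ p [::] y.1 0 c) cats0 hp mulr1 subr0 /c; ring.
    have [w' [e1 e2 e3]] := IH _ hc hw.
    exists ((y.1, c) :: w'); split.
    - by rewrite /= e1.
    - move=> x; rewrite inE => /orP [/eqP -> | xw]; first by rewrite /= ht.
      by move=> h; rewrite inE (e2 x xw h) orbT.
    - by rewrite /= ht -cat_rcons.
  pose c := - E Phi (p ++ [:: (y.1, 0)]).
  exists ((y.1, c) :: w); split => //.
  - move=> x; rewrite inE => /orP [/eqP -> | xw]; first by rewrite /= ht.
    by rewrite inE xw orbT.
  - rewrite /= ht (_ : [seq x <- w | tp x.1] = [::]).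
      rewrite (E_change _ p [::] y.1 0 c) cats0 hp mulr1 subr0 /c; ring.
    by apply/eqP; rewrite -size_eq0 size_filter eqn0Ngt -has_count hw.
have hw : has (fun x => tp x.1) w by rewrite ht in hh.
have [w' [e1 e2 e3]] := IH _ hp hw.
exists (y :: w'); split.
- by rewrite /= e1.
- move=> x; rewrite inE => /orP [/eqP -> | xw] h; first by rewrite mem_head.
  by rewrite inE (e2 x xw h) orbT.
- by rewrite /= ht.
Qed.
Lemma cbf_iii (k j M m : K) (G Psi : seq letter -> F) (w : seq item) :
  k != j -> M \in [:: k; j] -> m \in [:: k; j] -> m != M ->
  G [::] = 1 /\ Psi [::] = 1 ->
  (forall w, w != [::] -> valid Asub [:: m] w -> Psi w = 0) ->
  (forall w, w != [::] -> valid Asub [:: M] w -> G w = phiW w /\ Psi w = phiW w) ->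
  cbf_cond Asub [:: m] [:: M] G Psi ->
  (forall x, x \in w -> (x.1.1 = (k, true) \/ x.1.1 = (j, false)) /\ Asub x.1.1.1 x.1.1.2 x.1.2) ->
  (forall x, x \in w -> ~~ isM M x.1 -> x.2 = 0) ->
  has (fun x => isM M x.1) w -> E G [seq x <- w | isM M x.1] = 0 -> E G w = 0.
Proof.
move=> hkj hM hm hmM [hG0 hP0] hT1 hT2 hc hw1 hw2 hh htop.
set n := size w.
pose x0 : item := ((M, true, 0), 0).
pose b i := fcOf (nth x0 w i).
pose chi i := (nth x0 w i).1.1.2.
pose om i := isM M (nth x0 w i).1.
set c1 := (k == M).
have hjM : (j == M) = ~~ c1.
  rewrite /c1; move: hM; rewrite !inE => /orP [/eqP -> | /eqP ->]; rewrite eqxx.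
    by rewrite eq_sym (negbTE hkj).
  by rewrite (negbTE hkj).
have keym : forall y, y \in [:: k; j] -> y != M -> y = m.
  move=> y hy hyM; move: hm hM hy hmM hyM; rewrite !inE.
  by do 3 (case/orP => /eqP ->); rewrite ?eqxx.
have n0 : (0 < n)%N by rewrite /n; case: (w) hh.
have memw : forall i, (i < n)%N -> nth x0 w i \in w by move=> i; apply: mem_nth.
have chi_om : forall i, (i < n)%N -> chi i = (om i == c1).
  move=> i hi; have [[e|e] _] := hw1 _ (memw i hi); rewrite /chi /om /isM e /=.
    by rewrite eqxx.
  by rewrite hjM; case: (c1).
have hB : forall i, (i < n)%N -> in_B Asub (if om i then [:: M] else [:: m]) (chi i) (b i).
  move=> i hi p; rewrite !inE => /orP [/eqP -> | /eqP ->] l //=.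
  rewrite inE => /eqP ->.
  have [e1 e2] := hw1 _ (memw i hi).
  split => //; rewrite /om; case: ifP => hmM'; first by rewrite inE; exact: hmM'.
  rewrite inE (keym _ _ (negbT hmM')) //.
  by case: e1 => ->; rewrite !inE eqxx ?orbT.
pose posf t := [seq i <- iota 0 n | om i == t].
pose S1 := [seq i <- iota 0 n | chi i].
pose S2 := rev [seq i <- iota 0 n | ~~ chi i].
have eS1 : S1 = posf c1 by apply: eq_in_filter => i; rewrite mem_iota => /andP [_ hi]; apply: chi_om.
have eS2' : [seq i <- iota 0 n | ~~ chi i] = posf (~~ c1).
  apply: eq_in_filter => i; rewrite mem_iota => /andP [_ hi]; rewrite chi_om //.
  by case: (om i); case: (c1).
have sS1 : sort leq S1 = posf c1.
  by rewrite eS1 sorted_sort //; [exact: leq_trans | apply: sorted_filter; [exact: leq_trans | exact: iota_sorted]].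
have sS2 : sort leq S2 = posf (~~ c1).
  have -> : sort leq S2 = sort leq [seq i <- iota 0 n | ~~ chi i].
    by apply/perm_sortP; [exact: leq_total | exact: leq_trans | exact: anti_leq | rewrite perm_rev].
  by rewrite sorted_sort ?eS2' //; [exact: leq_trans | apply: sorted_filter; [exact: leq_trans | exact: iota_sorted]].
have c1S1 : forall y, y \in S1 -> om y = c1.
  move=> y; rewrite mem_filter mem_iota => /andP [h /andP [_ hy]].
  by move: h; rewrite chi_om // => /eqP.
have c2S2 : forall y, y \in S2 -> om y = ~~ c1.
  move=> y; rewrite mem_rev mem_filter mem_iota => /andP [h /andP [_ hy]].
  by move: h; rewrite chi_om //; case: (om y); case: (c1).
have eblk : blocks n chi om = [seq W <- [:: S1; S2] | W != [::]].
  rewrite /blocks -/S1 -/S2.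
  case: (eqVneq S1 [::]) => e1; case: (eqVneq S2 [::]) => e2.
  - by rewrite e1 e2.
  - by rewrite e1 /= (runs_const e2 c2S2) e2.
  - by rewrite e2 cats0 (runs_const e1 c1S1) /= e1.
  - by rewrite (runs_two e1 e2 c1S1 c2S2) /= e1 e2.
have evW : forall (Phi : seq letter -> F) W t, sort leq W = posf t ->
    ev Phi (bprod b W) = E Phi [seq x <- w | isM M x.1 == t].
  move=> Phi W t hs; rewrite ev_evp /b bprod_fcOf hs /posf /om /n.
  by rewrite (filter_nth_iota x0 w (fun x => isM M x.1 == t)).
have blkP : forall W, W \in blocks n chi om -> W != [::] /\ exists t, sort leq W = posf t.
  move=> W; rewrite eblk mem_filter !inE => /andP [-> /orP [/eqP -> | /eqP ->]]; split => //.
    by exists c1.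
  by exists (~~ c1).
have hPsi : forall W, W \in blocks n chi om -> ev Psi (bprod b W) = 0.
  move=> W hW; have [nW [t ht]] := blkP W hW; rewrite (evW _ _ _ ht).
  have nf : [seq x <- w | isM M x.1 == t] != [::].
    rewrite -(filter_nth_iota x0) -size_eq0 size_map -/n.
    have -> : [seq i <- iota 0 n | isM M (nth x0 w i).1 == t] = posf t by [].
    by rewrite -ht size_sort size_eq0.
  case: t ht nf => ht nf.
    rewrite (eq_filter (a2 := fun x => isM M x.1)) => [|x]; last by rewrite eqb_id.
    rewrite -htop; apply: E_ext => u su.
    case: (eqVneq u [::]) => [-> | un]; first by rewrite hP0 hG0.
    have vu : valid Asub [:: M] u.
      move=> l /su /mapP [x]; rewrite mem_filter => /andP [hx xw] ->.
      have [e1 e2] := hw1 x xw; split => //; by rewrite inE.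
    by have [-> ->] := hT2 u un vu.
  rewrite E_zero; last first.
    by move=> x; rewrite mem_filter => /andP [hx xw]; apply: hw2 => //; move: hx; case: (isM M x.1).
  apply: hT1; first by rewrite -size_eq0 size_map size_eq0.
  move=> l /mapP [x]; rewrite mem_filter => /andP [hx xw] ->.
  have [e1 e2] := hw1 x xw; split => //; rewrite inE; apply/eqP; apply: keym.
    by case: e1 => ->; rewrite !inE eqxx ?orbT.
  by rewrite /isM in hx; apply/negP => /eqP e; rewrite e eqxx in hx.
have [_ hG] := hc n chi om b n0 hB hPsi.
have ew : map (nth x0 w) (iota 0 n) = w by rewrite -[RHS](mkseq_nth x0 w).
move: hG; rewrite ev_evp /b bprod_fcOf (sorted_sort leq_trans (iota_sorted 0 n)) ew -/(E G w) => ->.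
pose T := if c1 then S1 else S2.
have sT : sort leq T = posf true by rewrite /T; case: (c1) sS1 sS2 => /= h1 h2; [exact: h1 | exact: h2].
have nT : T != [::].
  rewrite -size_eq0 -(size_sort leq) sT -(size_map (nth x0 w)) /posf /om /n.
  rewrite (filter_nth_iota x0 w (fun x => isM M x.1 == true)) size_eq0.
  apply/eqP => h; move/hasP: hh => [x xw hx].
  have : x \in [seq x <- w | isM M x.1 == true] by rewrite mem_filter hx xw.
  by rewrite h.
have Tb : T \in blocks n chi om.
  by rewrite eblk mem_filter nT /T !inE; case: (c1); rewrite eqxx ?orbT.
rewrite (big_rem T) //= (evW _ _ _ sT).
rewrite (eq_filter (a2 := fun x => isM M x.1)) => [|x]; last by rewrite eqb_id.
by rewrite htop mul0r.
Qed.
Lemma class_part (j k : K) : j != k -> classical_indep mul phi (Asub k true) (Asub j false).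
Proof.
move=> hjk n x inL n0 hx.
have hkj : k != j by rewrite eq_sym.
pose M := if (k < j)%O then j else k.
pose m := if (k < j)%O then k else j.
have hM : M \in [:: k; j] by rewrite /M; case: ifP; rewrite !inE eqxx ?orbT.
have hm : m \in [:: k; j] by rewrite /m; case: ifP; rewrite !inE eqxx ?orbT.
have hmM : m != M by rewrite /m /M; case: ifP.
have ss : sorted <%O (rcons [:: m] M).
  rewrite /= andbT /m /M; case: ifP => // h.
  by move: (lt_total hkj); rewrite h.
have [G [Psi [[hG0 hP0] hT1 hT2 hc hGv]]] := setup (isT : [:: m] != [::]) ss.
pose okw (w : seq item) := (forall y, y \in w -> (y.1.1 = (k, true) \/ y.1.1 = (j, false)) /\ Asub y.1.1.1 y.1.1.2 y.1.2) /\
   (forall y, y \in w -> ~~ isM M y.1 -> y.2 = 0).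
pose Rf (w : seq item) := G [seq y.1 | y <- w & ~~ isM M y.1] * E G [seq y <- w | isM M y.1].
have memc : forall (u v : seq item) y z, z \in u ++ v -> z \in u ++ y :: v.
  by move=> u v y z; rewrite !mem_cat inE => /orP [->|->]; rewrite ?orbT.
have main : forall w, okw w -> E G w = Rf w.
  apply: (@chain _ F (isM M) okw (E G) Rf).
  - by move=> u v l a a'; apply: E_change.
  - move=> u v l a a' ht; rewrite /Rf !filter_cat /= ht /= (E_change _ _ _ l a a'); ring.
  - move=> u v l a [h1 h2] ht; split=> y yw; [apply: h1 | apply: h2]; exact: memc.
  - move=> u v l a a' [h1 h2] ht; split.
    + move=> y; rewrite mem_cat inE => /orP [yu | /orP [/eqP -> | yv]].
      * by apply: h1; rewrite mem_cat yu.
      * by have [] := h1 (l, a); rewrite ?mem_cat ?mem_head ?orbT.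
      * by apply: h1; rewrite mem_cat inE yv !orbT.
    + move=> y; rewrite mem_cat inE => /orP [yu | /orP [/eqP -> | yv]].
      * by apply: h2; rewrite mem_cat yu.
      * by rewrite /= ht.
      * by apply: h2; rewrite mem_cat inE yv !orbT.
  - move=> u v l a [h1 h2] ht; apply: (h2 (l, a)) => //.
    by rewrite mem_cat mem_head orbT.
  - move=> w0 [h1 h2] hn.
    have hb : forall y, y \in w0 -> ~~ isM M y.1.
      by move=> y yw; apply/negP => hy; move/hasPn: hn => /(_ y yw); rewrite hy.
    rewrite E_zero; last by move=> y yw; apply: h2 => //; apply: hb.
    rewrite /Rf (_ : [seq y <- w0 | isM M y.1] = [::]); last first.
      apply/eqP; rewrite -size_eq0 size_filter eqn0Ngt -has_count; exact: hn.
    rewrite E_nil // mulr1; congr G; congr map; apply/esym/all_filterP.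
    by apply/allP.
  - move=> w0 [h1 h2] hn.
    have [w' [ef e2 e3]] := adjust (E_nil hG0) hn.
    have ok' : okw w'.
      split.
      + move=> y yw; have : y.1 \in map fst w0 by rewrite -ef; apply: map_f.
        case/mapP => z zw ez; rewrite ez; exact: h1.
      + by move=> y yw hy; apply: h2 => //; apply: e2.
    exists w'; split => //.
    have hh' : has (fun y => isM M y.1) w' by rewrite -(has_map fst (fun l => isM M l)) ef has_map.
    rewrite /Rf /= in e3 *; rewrite e3 mulr0.
    apply: (@cbf_iii k j M m G Psi) => //; by case: ok'.
pose l i : letter := if inL i then (k, true, x i) else (j, false, x i).
pose w0 := [seq (l i, 0 : F) | i <- iota 0 n].
have ok0 : okw w0.
  split; last by move=> y /mapP [i _ ->].
  move=> y /mapP [i]; rewrite mem_iota add0n => /andP [_ hi] -> /=.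
  have := hx i hi; rewrite /l; case: (inL i) => h; split => //; by [left | right].
have hfl : forall P : pred letter, [seq y.1 | y <- w0 & P y.1] = map l [seq i <- iota 0 n | P (l i)].
  by move=> P; rewrite /w0 filter_map -map_comp.
have hphi : forall t, phiW (map l t) = phil mul phi (map x t).
  by move=> t; rewrite /phiw -map_comp; congr (phil mul phi _); apply: eq_map => i; rewrite /l /=; case: (inL i).
have hk : k \in rcons [:: m] M.
  by move: hmM; rewrite /= !inE /m /M; case: ifP => _; rewrite eqxx ?orbT.
have hj : j \in rcons [:: m] M.
  by move: hmM; rewrite /= !inE /m /M; case: ifP => _; rewrite eqxx ?orbT.
have vl : forall t, {subset t <= iota 0 n} -> valid Asub (rcons [:: m] M) (map l t).
  move=> t st y /mapP [i /st]; rewrite mem_iota add0n => /andP [_ hi] ->.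
  have := hx i hi; rewrite /l; case: (inL i) => h; by split.
have := main w0 ok0.
rewrite E_zero; last by move=> y /mapP [i _ ->].
rewrite /Rf E_zero; last by move=> y; rewrite mem_filter => /andP [_ /mapP [i _ ->]].
have e0 : [seq y.1 | y <- w0] = map l (iota 0 n) by rewrite /w0 -map_comp.
have sf : forall P : pred nat, {subset [seq i <- iota 0 n | P i] <= iota 0 n}.
  by move=> P i; rewrite mem_filter => /andP [].
rewrite e0 (hfl (fun y => ~~ isM M y)) (hfl (isM M)).
rewrite (hGv _ (vl _ (fun i h => h))) (hGv _ (vl _ (sf _))) (hGv _ (vl _ (sf _))) !hphi => ->.
case hlt: (k < j)%O.
  congr (phil mul phi (map x _) * phil mul phi (map x _)); apply: eq_filter => i;
    rewrite /isM /l /M hlt; case: (inL i) => /=; by rewrite ?eqxx ?(negbTE hkj).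
rewrite mulrC.
congr (phil mul phi (map x _) * phil mul phi (map x _)); apply: eq_filter => i;
  rewrite /isM /l /M hlt; case: (inL i) => /=; by rewrite ?eqxx ?(negbTE hjk).
Qed.


End Main.

End Aux.

Theorem mainTheorem4 (F : fieldType) (V : lmodType F) (mul : V -> V -> V)
  (phi : V -> F) (d : Order.disp_t) (K : orderType d)
  (Asub : K -> bool -> V -> Prop) :
  nc_space mul phi ->
  (forall k s, subalg mul (Asub k s)) ->
  bm_indep mul phi Asub ->
  [/\ mono_indep mul phi (fun x y : K => (x < y)%O) (fun k => Asub k true),
      mono_indep mul phi (fun x y : K => (x < y)%O) (fun k => Asub k false) &
      forall j k : K, j != k -> classical_indep mul phi (Asub k true) (Asub j false)].
Proof.
move=> nc hsub bmi; split.
- exact: (@Aux.mono_part F V mul phi d K Asub nc hsub bmi true).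
- exact: (@Aux.mono_part F V mul phi d K Asub nc hsub bmi false).
- move=> j k hjk; exact: (@Aux.class_part F V mul phi d K Asub bmi j k hjk).
Qed.
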